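(* Fix an integer $k\ge 2$. Let $M$ be the set consisting of the empty composition together with all Fibonacci compositions that start with $(2,1^{k-2})$. Then $M$ is a free monoid under concatenation, and its primes are exactly the compositions of the form $(2,1^{k-2},1^i,q)$ where $i\ge 0$ is an integer and $q$ is either empty or a Fibonacci composition that starts with $2$ and does not contain $(2,1^{k-2})$ as a block of consecutive parts. Moreover, with the weight of a composition being the sum of its parts, the generating function for the primes of $M$ is $\dfrac{x^k}{1-x-x^2+x^k}$, and hence $$1+\frac{x^k}{1-x-x^2}=\Bigl(1-\frac{x^k}{1-x-x^2+x^k}\Bigr)^{-1}.$$
   Context: A Fibonacci composition is a composition (finite sequence of positive integers) all of whose parts are $1$ or $2$; the Fibonacci compositions form the free monoid $\{1,2\}^*$ under concatenation. $1^j$ denotes $j$ consecutive parts equal to $1$. A free monoid is one in which every element factors uniquely as a product of elements of a set of primes. The generating function of a set $S$ of compositions is $\sum_{c\in S} x^{|c|}$ where $|c|$ is the sum of the parts of $c$. *)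

(* Defs.v *)
From mathcomp Require Import all_boot all_order all_algebra.
Set Implicit Arguments. Unset Strict Implicit. Unset Printing Implicit Defensive.
Import GRing.Theory Num.Theory.

(* Compositions are finite sequences of positive integers: seq nat. *)
Definition fibcomp (c : seq nat) : bool := all (fun p => (p == 1) || (p == 2)) c.

Definition weight (c : seq nat) : nat := sumn c.

Definition blk (k : nat) : seq nat := 2 :: nseq (k - 2) 1.

Definition inM (k : nat) (c : seq nat) : bool :=
  (c == [::]) || (fibcomp c && prefix (blk k) c).

Definition submonoid (S : pred (seq nat)) : Prop :=
  S [::] /\ forall a b, S a -> S b -> S (a ++ b).

(* primes (irreducibles) of S: nonidentity elements of S that are not a
   concatenation of two nonidentity elements of S.  (a ++ b = c forces
   a = take i c, b = drop i c with i = size a.) *)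
Definition primeS (S : pred (seq nat)) (c : seq nat) : bool :=
  [&& S c, c != [::] &
      ~~ has (fun i => S (take i c) && S (drop i c)) (iota 1 (size c).-1)].

Definition free_monoid (S : pred (seq nat)) : Prop :=
  submonoid S /\
  forall c, S c -> exists! ps : seq (seq nat), all (primeS S) ps /\ flatten ps = c.

Fixpoint words12 (l : nat) : seq (seq nat) :=
  if l is l'.+1 then [seq x :: w | x <- [:: 1; 2], w <- words12 l'] else [:: [::]].

Definition fibcomps (n : nat) : seq (seq nat) :=
  [seq c <- flatten [seq words12 l | l <- iota 0 n.+1] | weight c == n].

(* number of Fibonacci compositions of weight n in S, i.e. the coefficient of
   x^n in the generating function of S (for S a set of Fibonacci compositions) *)
Definition gfcoef (S : pred (seq nat)) (n : nat) : int := (count S (fibcomps n))%:Z.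

(* coefficient of x^n in x^j * F(x), where f n = [x^n] F(x) *)
Definition shiftc (f : nat -> int) (j n : nat) : int :=
  if (j <= n)%N then f (n - j)%N else 0.

(* Main.v *)
Require Import Defs.
From mathcomp Require Import all_boot all_order all_algebra zify.
From mathcomp Require Import ring lra.
Import GRing.Theory Num.Theory.

Fixpoint fc (n : nat) : seq (seq nat) :=
  match n with
  | 0 => [:: [::]]
  | S m => match m with
           | 0 => [:: [:: 1]]
           | S m' => map (cons 1) (fc m) ++ map (cons 2) (fc m')
           end
  end.

Lemma fcSS n : fc n.+2 = map (cons 1) (fc n.+1) ++ map (cons 2) (fc n).
Proof. by []. Qed.

Lemma weight_cons x c : weight (x :: c) = x + weight c. Proof. by []. Qed.

Lemma fibcomp_cons x c : fibcomp (x :: c) = ((x == 1) || (x == 2)) && fibcomp c.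
Proof. by []. Qed.

Lemma mem_fc n c : (c \in fc n) = fibcomp c && (weight c == n).
Proof.
elim: n {-2}n (leqnn n) c => [|N IH] n.
  rewrite leqn0 => /eqP-> [|x c] //=.
  rewrite inE /= andbC /weight /=. case: x => [|x] //=; by rewrite andbF.
case: n => [|n] Hn.
  move=> [|x c] //=; rewrite inE /= andbC /weight /=; case: x => [|x] //=; by rewrite andbF.
case: n Hn => [|n] Hn.
  move=> [|x c] //=; rewrite inE /weight /=.
  case: x => [|[|x]] //=.
    case: c => [|y c] //=; rewrite eqseq_cons /= add1n eqSS.
    by case: y => [|y] //=; rewrite addSn andbF.
  by rewrite !addSn /= andbF.
move=> [|x c]; rewrite fcSS mem_cat.
  by apply/negbTE; rewrite negb_or; apply/andP; split; apply/mapP => [[y _]].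
have H1 : (x :: c \in [seq 1 :: w | w <- fc n.+1]) = (x == 1) && (c \in fc n.+1).
  case: (x =P 1) => [->|Hx] /=; first by rewrite mem_map //; move=> a b [].
  by apply/mapP => [[y _ [E _]]]; apply: Hx.
have H2 : (x :: c \in [seq 2 :: w | w <- fc n]) = (x == 2) && (c \in fc n).
  case: (x =P 2) => [->|Hx] /=; first by rewrite mem_map //; move=> a b [].
  by apply/mapP => [[y _ [E _]]]; apply: Hx.
rewrite H1 H2 !IH; [|lia|lia].
rewrite fibcomp_cons weight_cons.
case: (x =P 1) => [->|H] /=; first by rewrite orbF add1n eqSS.
case: (x =P 2) => [->|H'] /=; first by rewrite add2n !eqSS.
by [].
Qed.

Lemma uniq_fc n : uniq (fc n).
Proof.
suff: uniq (fc n) && uniq (fc n.+1) by case/andP.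
elim: n => [|n /andP[U1 U2]] //=; rewrite U2 /=.
rewrite cat_uniq !map_inj_uniq //; try by move=> a b [].
rewrite U1 U2 /= andbT; apply/hasPn => w /mapP[v _ ->].
by apply/mapP => [[u _ []]].
Qed.

Lemma words12S l : words12 l.+1 = map (cons 1) (words12 l) ++ map (cons 2) (words12 l).
Proof. by rewrite /= cats0. Qed.

Lemma mem_cons_map (a x : nat) c (s : seq (seq nat)) :
  (x :: c \in map (cons a) s) = (x == a) && (c \in s).
Proof.
case: (x =P a) => [->|Hx] /=; first by rewrite mem_map //; move=> u v [].
by apply/mapP => [[y _ [E _]]]; apply: Hx.
Qed.

Lemma nil_notin_map (a : nat) (s : seq (seq nat)) : ([::] \in map (cons a) s) = false.
Proof. by apply/negbTE/mapP => [[y _]]. Qed.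

Lemma mem_words12 l c : (c \in words12 l) = (size c == l) && fibcomp c.
Proof.
elim: l c => [|l IH] [|x c]; rewrite ?words12S ?mem_cat ?nil_notin_map //=.
rewrite !mem_cons_map !IH eqSS.
by case: (x == 1); case: (x == 2); case: (size c == l); case: (fibcomp c).
Qed.

Lemma uniq_words12 l : uniq (words12 l).
Proof.
elim: l => [|l IH] //; rewrite words12S cat_uniq !map_inj_uniq //; try by move=> a b [].
rewrite IH /= andbT; apply/hasPn => w /mapP[v _ ->].
by rewrite mem_cons_map.
Qed.

Lemma size_le_weight c : fibcomp c -> size c <= weight c.
Proof.
elim: c => [|x c IH] //=; rewrite /weight /= => /andP[Hx Hc].
have := IH Hc; rewrite /weight => H.
by case/orP: Hx => /eqP->; lia.
Qed.

Lemma mem_fibcomps n c : (c \in fibcomps n) = fibcomp c && (weight c == n).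
Proof.
rewrite /fibcomps mem_filter andbC.
case: (weight c =P n) => [E|_]; last by rewrite !andbF.
rewrite !andbT; apply/flatten_mapP/idP => [[l _]|Hc].
  by rewrite mem_words12 => /andP[].
exists (size c); first by rewrite mem_iota /= add0n ltnS -E size_le_weight.
by rewrite mem_words12 eqxx.
Qed.

Lemma uniq_flat_words m r : uniq (flatten [seq words12 l | l <- iota m r]).
Proof.
elim: r m => [|r IH] m //=; rewrite cat_uniq uniq_words12 IH andbT /=.
apply/hasPn => w /flatten_mapP[l]; rewrite mem_iota mem_words12 => /andP[Hl _] /andP[/eqP Hs _].
by rewrite mem_words12 Hs; apply/negP => /andP[/eqP Hm _]; lia.
Qed.

Lemma count_fibcomps (P : pred (seq nat)) n : count P (fibcomps n) = count P (fc n).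
Proof.
suff /permP H : perm_eq (fibcomps n) (fc n) by apply: H.
apply/uniq_perm; first by rewrite filter_uniq // uniq_flat_words.
  exact: uniq_fc.
by move=> c; rewrite mem_fibcomps mem_fc.
Qed.

Lemma count_fc (P : pred (seq nat)) n : count P (fc n) =
  (if n == 0 then P [::] : nat else 0)
  + (if 1 <= n then count (fun c => P (1 :: c)) (fc (n - 1)) else 0)
  + (if 2 <= n then count (fun c => P (2 :: c)) (fc (n - 2)) else 0).
Proof.
case: n => [|[|n]]; first by rewrite /= !addn0.
  by rewrite /= !addn0 add0n.
by rewrite fcSS count_cat !count_map add0n /= !subSS subn0.
Qed.

Lemma if00 (b : bool) : (if b then 0 else 0) = 0. Proof. by case: b. Qed.

Lemma count_prefix (w : seq nat) : fibcomp w -> forall n (P : pred (seq nat)),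
  count (fun c => prefix w c && P c) (fc n) =
  if weight w <= n then count (fun r => P (w ++ r)) (fc (n - weight w)) else 0.
Proof.
elim: w => [|x w IH] /=.
  move=> _ n P; rewrite /weight /= subn0.
  by apply: eq_count => c; rewrite prefix0s.
move=> /andP[Hx Hw] n P; rewrite count_fc /=.
rewrite if00 add0n.
have E0 : forall y m, x != y -> count (fun c => (x == y) && prefix w c && P (y :: c)) (fc m) = 0.
  by move=> y m /negbTE->; rewrite (eq_count (a2 := pred0)) ?count_pred0.
case/orP: Hx => /eqP Ex; subst x.
  rewrite (E0 2) // if00 addn0.
  under eq_count do rewrite eqxx /=.
  case: ifP => Hn; last by case: ifP => //; lia.
  rewrite IH //; case: ifP => H1; case: ifP => H2; try lia.
  by rewrite subnDA.
rewrite (E0 1) // if00 add0n.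
under eq_count do rewrite eqxx /=.
case: ifP => Hn; last by case: ifP => //; lia.
rewrite IH //; case: ifP => H1; case: ifP => H2; try lia.
by rewrite subnDA.
Qed.


Lemma factor_exists (S : pred (seq nat)) c : S c ->
  exists ps, all (primeS S) ps /\ flatten ps = c.
Proof.
have [n Hn] : exists n, size c < n by exists (size c).+1.
elim: n c Hn => [|n IH] c Hn Sc //.
case: (c =P [::]) => [->|/eqP Hc]; first by exists [::].
case Pc: (primeS S c); first by exists [:: c]; rewrite /= Pc cats0.
move: Pc; rewrite /primeS Sc Hc /= => /negbFE /hasP [i].
rewrite mem_iota => /andP[H1 H2] /andP[St Sd].
have Hs : 0 < size c by rewrite lt0n size_eq0.
have [ps1 [A1 F1]] := IH (take i c) ltac:(rewrite size_take; case: ifP; lia) St.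
have [ps2 [A2 F2]] := IH (drop i c) ltac:(rewrite size_drop; lia) Sd.
exists (ps1 ++ ps2); by rewrite all_cat A1 A2 flatten_cat F1 F2 cat_take_drop.
Qed.

Section Words.
Variable k : nat.
Hypothesis hk : 2 <= k.
Local Notation b := (blk k).

Lemma size_blk : size b = k.-1.
Proof. rewrite /blk /= size_nseq; lia. Qed.

Lemma weight_blk : weight b = k.
Proof.
rewrite /blk /weight /=.
have -> : forall j, sumn (nseq j 1) = j by elim=> //= j ->; lia.
lia.
Qed.

Lemma fib_blk : fibcomp b.
Proof. by rewrite /blk /fibcomp /= all_nseq orbT. Qed.

Lemma blk_nil : b != [::]. Proof. by []. Qed.

Lemma nth_blk i : 0 < i < size b -> nth 0 b i = 1.
Proof.
case: i => [|i] //; rewrite /blk /= size_nseq ltnS => H.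
by rewrite nth_nseq H.
Qed.

Lemma prefix_nth (u v : seq nat) i : prefix u v -> i < size u -> nth 0 v i = nth 0 u i.
Proof. by move=> /prefixP[w ->] H; rewrite nth_cat H. Qed.


Lemma fib_cat x y : fibcomp (x ++ y) = fibcomp x && fibcomp y.
Proof. by rewrite /fibcomp all_cat. Qed.

Lemma inM_cat x y : inM k x -> inM k y -> inM k (x ++ y).
Proof.
rewrite /inM; case: x => [|a x] Hx Hy; first by [].
move: Hx => /orP[//|/andP[Fx Px]].
apply/orP; right; rewrite fib_cat Fx andTb.
case/orP: Hy => [/eqP->|/andP[Fy Py]]; first by rewrite cats0 Px.
by rewrite Fy prefix_catl.
Qed.

Lemma inM_flatten ps : all (primeS (inM k)) ps -> inM k (flatten ps).
Proof.
elim: ps => [|p ps IH] /=; first by rewrite /inM eqxx.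
by case/andP => /and3P[Hp _ _] /IH; apply: inM_cat.
Qed.

Lemma inM_ne x : x != [::] -> inM k x = fibcomp x && prefix b x.
Proof. by rewrite /inM => /negbTE->. Qed.

Lemma primeE c : primeS (inM k) c = [&& fibcomp c, prefix b c & ~~ infix b (drop (size b) c)].
Proof.
rewrite /primeS.
case: (c =P [::]) => [->|/eqP Hc]; first by simpl.
rewrite inM_ne // [~~ false]/= andTb -andbA.
case Fc: (fibcomp c) => //=; case Pc: (prefix b c) => //=.
congr negb.
move/prefixP: Pc => [r Er]; subst c; rewrite drop_size_cat //.
have Fr : fibcomp r by move: Fc; rewrite fib_cat => /andP[].
have Sb := size_blk.
apply/hasP/idP.
  move=> [i]; rewrite mem_iota => /andP[H1 H2] /andP[Ht Hd].
  have Hi : i < size (b ++ r) by rewrite size_cat in H2 *; lia.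
  have Ht' : take i (b ++ r) != [::] by rewrite -size_eq0 size_take Hi; lia.
  have Hd' : drop i (b ++ r) != [::] by rewrite -size_eq0 size_drop; rewrite size_cat in Hi *; lia.
  rewrite inM_ne // in Ht; rewrite inM_ne // in Hd.
  case/andP: Ht => _ /size_prefix; rewrite size_take Hi => Hsi.
  case/andP: Hd => _ /prefixW.
  rewrite drop_cat; case: ifP => Hlt; first by rewrite ltnNge Hsi in Hlt.
  move=> Hinf; apply: (infix_trans Hinf); exact: infix_drop.
move/infixP => [u [v Ev]]; subst r.
exists (size b + size u).
  rewrite mem_iota !size_cat Sb; move: (size u) (size v) => su sv; lia.
have Fu : fibcomp u by move: Fr; rewrite !fib_cat => /andP[].
have Fv : fibcomp v by move: Fr; rewrite !fib_cat => /and3P[].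
rewrite catA take_size_cat ?size_cat // drop_size_cat ?size_cat //.
rewrite !inM_ne //; try by rewrite -size_eq0 size_cat; lia.
by rewrite !fib_cat fib_blk Fu Fv !prefix_prefix.
Qed.

Lemma decomp_ones (r : seq nat) : fibcomp r ->
  exists i q, r = nseq i 1 ++ q /\ (q = [::] \/ head 0 q = 2).
Proof.
elim: r => [|x r IH]; first by exists 0, [::]; split; [|left].
rewrite fibcomp_cons => /andP[/orP[/eqP->|/eqP->] /IH [i [q [E H]]]].
  by exists i.+1, q; rewrite E.
by exists 0, (2 :: r); split; [|right].
Qed.

Lemma noinf_ones i (q : seq nat) : ~~ infix b q -> ~~ infix b (nseq i 1 ++ q).
Proof.
move=> H; elim: i => [|i IH] //=.
Qed.

Lemma prime_form c : primeS (inM k) c <->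
  exists (i : nat) (q : seq nat), c = b ++ nseq i 1%N ++ q /\
       (q = [::] \/ [/\ fibcomp q, head 0%N q = 2%N & ~~ infix b q]).
Proof.
rewrite primeE; split.
  case/and3P => Fc /prefixP[r Er] Hr; subst c.
  move: Hr; rewrite drop_size_cat // => Hr.
  have Fr : fibcomp r by move: Fc; rewrite fib_cat => /andP[].
  have [i [q [Eq Hq]]] := decomp_ones r Fr.
  exists i, q; split; first by rewrite Eq.
  case: Hq => [->|Hq]; [by left|right].
  move: Fr Hr; rewrite Eq fib_cat => /andP[_ Fq] Hr.
  split => //; apply/negP => Hb; move/negP: Hr; apply.
  exact: infix_catl.
move=> [i [q [Ec Hq]]]; subst c.
rewrite fib_cat fib_blk prefix_prefix drop_size_cat //= fib_cat.
have Fn : fibcomp (nseq i 1) by rewrite /fibcomp all_nseq orbT.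
rewrite Fn /=; case: Hq => [->|[Fq _ Hq]].
  by rewrite /fibcomp /= noinf_ones // infixs0.
by rewrite Fq noinf_ones.
Qed.

Lemma prime_head p q x y : primeS (inM k) p -> primeS (inM k) q ->
  inM k x -> inM k y -> p ++ x = q ++ y -> size p <= size q -> p = q.
Proof.
move=> Pp Pq Mx My E Hle.
have Ep : p = take (size p) q.
  by rewrite -(takel_cat y Hle) -E take_size_cat.
move: Hle; rewrite leq_eqVlt => /orP[/eqP Hs|Hlt].
  by rewrite Ep Hs take_size.
pose t := drop (size p) q.
have Eq : q = p ++ t by rewrite {1}Ep cat_take_drop.
have Ex : x = t ++ y.
  by rewrite -(drop_size_cat x (erefl (size p))) E drop_cat Hlt.
have St : size t = size q - size p by rewrite size_drop.
have Ht : t != [::] by rewrite -size_eq0 St; move: (size q) (size p) Hlt => a c; lia.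
have Hx : x != [::].
  by rewrite Ex; move: Ht; case: (t) => // a l _; case: y {E Ex My}.
move: Mx; rewrite inM_ne // Ex fib_cat => /andP[/andP[Ft Fy] Px].
have Sb := size_blk.
case: (leqP (size b) (size t)) => Hbt.
  have Pt : prefix b t by move: Px; rewrite !prefixE takel_cat.
  have Mt : inM k t by rewrite inM_ne // Ft Pt.
  have Mp : inM k p by case/and3P: Pp.
  move: Pq; rewrite /primeS => /and3P[_ _ /hasP]; case.
  exists (size p).
    have Hp0 : 0 < size p by case/and3P: Pp => _; rewrite -size_eq0 lt0n.
    rewrite mem_iota; move: (size p) (size q) Hp0 Hlt => a c; lia.
  by rewrite Eq take_size_cat // drop_size_cat // Mp Mt.
have Hy : y != [::].
  apply/negP => /eqP Ey; move: Px; rewrite Ey cats0 => /size_prefix H; by rewrite leqNgt Hbt in H.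
move: My; rewrite inM_ne // => /andP[_ Py].
have N1 : nth 0 (t ++ y) (size t) = 2.
  rewrite nth_cat ltnn subnn (prefix_nth _ _ _ Py) //; lia.
have N2 : nth 0 (t ++ y) (size t) = 1.
  rewrite (prefix_nth _ _ _ Px) // nth_blk //; move: Ht; rewrite -size_eq0 Hbt; lia.
by rewrite N1 in N2.
Qed.

Lemma prime_fact_uniq ps qs : all (primeS (inM k)) ps -> all (primeS (inM k)) qs ->
  flatten ps = flatten qs -> ps = qs.
Proof.
elim: ps qs => [|p ps IH] [|q qs] //=.
- move=> _ /andP[/and3P[_ Hq _] _] E.
  by move: Hq; case: q E.
- move=> /andP[/and3P[_ Hp _] _] _ E.
  by move: Hp; case: p E.
move=> /andP[Pp Aps] /andP[Pq Aqs] E.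
have Mx := inM_flatten _ Aps; have My := inM_flatten _ Aqs.
have Epq : p = q.
  case: (leqP (size p) (size q)) => H; first exact: (prime_head _ _ _ _ Pp Pq Mx My E H).
  by apply/esym; apply: (prime_head _ _ _ _ Pq Pp My Mx (esym E) (ltnW H)).
subst q; congr cons; apply: IH => //.
by have := congr1 (drop (size p)) E; rewrite !drop_size_cat.
Qed.

Lemma free_inM : free_monoid (inM k).
Proof.
split; first by split; [rewrite /inM eqxx | exact: inM_cat].
move=> c Mc; have [ps [Aps Fps]] := factor_exists _ _ Mc.
exists ps; split => // qs [Aqs Fqs].
by apply: prime_fact_uniq; rewrite // Fps Fqs.
Qed.

End Words.


Section Count.
Variable k : nat.
Hypothesis hk : 2 <= k.
Local Notation b := (blk k).

Definition Fn n := size (fc n).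
Definition av m := count (fun r => ~~ infix b r) (fc m).

Lemma FnSS n : Fn n.+2 = Fn n.+1 + Fn n.
Proof. by rewrite /Fn fcSS size_cat !size_map. Qed.

Lemma count_inM n : count (inM k) (fc n) = (n == 0) + (if k <= n then Fn (n - k) else 0).
Proof.
case: n => [|n]; first by rewrite /= /inM /=; case: ifP => //; lia.
rewrite add0n.
rewrite (@eq_in_count _ _ (fun c => prefix b c && predT c)); last first.
  move=> c; rewrite mem_fc => /andP[Fc /eqP Wc].
  rewrite inM_ne ?Fc ?andbT //; apply/negP => /eqP Ec; move: Wc; rewrite Ec.
  by rewrite /weight.
rewrite count_prefix ?fib_blk // weight_blk //.
Qed.

Lemma count_prime n : count (primeS (inM k)) (fc n) = if k <= n then av (n - k) else 0.
Proof.
rewrite (@eq_in_count _ _ (fun c => prefix b c && ~~ infix b (drop (size b) c))); last first.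
  by move=> c; rewrite mem_fc => /andP[Fc _]; rewrite primeE // Fc.
rewrite count_prefix ?fib_blk // weight_blk //.
case: ifP => // _; rewrite /av; apply: eq_count => r.
by rewrite drop_size_cat.
Qed.

Lemma count_split (P Q : pred (seq nat)) s :
  count P s = count (fun x => Q x && P x) s + count (fun x => P x && ~~ Q x) s.
Proof.
elim: s => [|x s IH] //=; rewrite IH.
by case: (P x); case: (Q x) => /=; lia.
Qed.

Lemma av0 : av 0 = 1.
Proof. by rewrite /av /=. Qed.

Lemma av1 : av 1 = 1.
Proof. by rewrite /av /= /blk /=; case: (k - 2). Qed.

Lemma avSS m : av m.+2 + (if k - 2 <= m then av (m - (k - 2)) else 0) = av m.+1 + av m.
Proof.
rewrite {1}/av fcSS count_cat !count_map.
have E1 : count (preim (cons 1) (fun c => ~~ infix b c)) (fc m.+1) = av m.+1.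
  by apply: eq_count => c /=.
have E2 : count (preim (cons 2) (fun c => ~~ infix b c)) (fc m) =
   count (fun c => ~~ infix b c && ~~ prefix (nseq (k - 2) 1) c) (fc m).
  by apply: eq_count => c /=; rewrite negb_or andbC.
have -> : av m = count (fun c => prefix (nseq (k-2) 1) c && ~~ infix b c) (fc m)
   + count (fun c => ~~ infix b c && ~~ prefix (nseq (k - 2) 1) c) (fc m) by apply: count_split.
rewrite E1 E2.
rewrite count_prefix; last by rewrite /fibcomp all_nseq orbT.
have Wn : weight (nseq (k - 2) 1) = k - 2.
  by rewrite /weight; elim: (k - 2) => //= j ->.
rewrite Wn.
have -> : count (fun r => ~~ infix b (nseq (k - 2) 1 ++ r)) (fc (m - (k - 2)))
          = av (m - (k - 2)).
  apply: eq_count => r; apply/idP/idP => H.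
    by apply/negP => /(infix_catl (nseq (k - 2) 1)) H'; move/negP: H.
  exact: noinf_ones.
rewrite /av; case: ifP => _; lia.
Qed.

End Count.

Section IntId.
Variable k : nat.
Hypothesis hk : (2 <= k)%N.
Local Open Scope ring_scope.

Definition hU (u : nat -> nat) (n : nat) : int := if (k <= n)%N then (u (n - k)%N)%:Z else 0.

Lemma shiftc_hU u j n :
  shiftc (hU u) j n = if (k + j <= n)%N then (u (n - (k + j))%N)%:Z else 0.
Proof.
rewrite /shiftc /hU; repeat case: ifP => ?; try (exfalso; lia); try done.
congr (Posz (u _)); lia.
Qed.

Lemma hU_shift0 u n : hU u n = shiftc (hU u) 0 n.
Proof. by rewrite /shiftc subn0. Qed.

Lemma hU_kd u d j : ((if (k + j <= k + d)%N then (u (k + d - (k + j))%N)%:Z else 0) : int)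
   = if (j <= d)%N then (u (d - j)%N)%:Z else 0.
Proof. by rewrite leq_add2l subnDl. Qed.

Lemma id3 n : hU (av k) n - shiftc (hU (av k)) 1 n - shiftc (hU (av k)) 2 n
   + shiftc (hU (av k)) k n = (n == k)%:R.
Proof.
rewrite hU_shift0 !shiftc_hU.
case: (ltnP n k) => Hn.
  do 4 (case: ifP => ?; first (exfalso; lia)).
  by rewrite (_ : (n == k) = false) //; lia.
have -> : n = (k + (n - k))%N by lia.
move: (n - k)%N => d; rewrite !hU_kd.
have -> : (k + d == k)%N = (d == 0)%N by rewrite -{2}[k]addn0 eqn_add2l.
case: d => [|[|d]] /=.
- rewrite subn0 av0; case: ifP => ?; [exfalso; lia | by []].
- rewrite subn0 subnn av1 av0; case: ifP => ?; [exfalso; lia | by []].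
- have E := avSS k hk d.
  rewrite subn0 !subSS !subn0.
  have -> : ((k <= d.+2) = (k - 2 <= d))%N by lia.
  have -> : (d.+2 - k = d - (k - 2))%N by lia.
  move: E; case: ifP => _ E; lia.
Qed.

End IntId.

Section IntId2.
Variable k : nat.
Hypothesis hk : (2 <= k)%N.
Local Open Scope ring_scope.

Lemma id4F n : hU k Fn n - shiftc (hU k Fn) 1 n - shiftc (hU k Fn) 2 n = (n == k)%:R.
Proof.
rewrite hU_shift0 !shiftc_hU.
case: (ltnP n k) => Hn.
  do 3 (case: ifP => ?; first (exfalso; lia)).
  by rewrite (_ : (n == k) = false) //; lia.
have -> : n = (k + (n - k))%N by lia.
move: (n - k)%N => d; rewrite !hU_kd.
have -> : (k + d == k)%N = (d == 0)%N by rewrite -{2}[k]addn0 eqn_add2l.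
case: d => [|[|d]] /=.
- by rewrite subn0.
- by rewrite subn0 subnn.
- have E := FnSS d.
  rewrite subn0 !subSS !subn0; lia.
all: exact: hk.
Qed.

Lemma gcoef n : gfcoef (inM k) n = (n == 0%N)%:R + hU k Fn n.
Proof.
rewrite /gfcoef count_fibcomps count_inM // PoszD /hU.
by congr (_ + _); [case: (n == 0%N) | case: ifP].
Qed.

Lemma pcoef n : gfcoef (primeS (inM k)) n = hU k (av k) n.
Proof. by rewrite /gfcoef count_fibcomps count_prime // /hU; case: ifP. Qed.

Lemma id4 n : gfcoef (inM k) n - shiftc (gfcoef (inM k)) 1 n - shiftc (gfcoef (inM k)) 2 n
     = (n == 0%N)%:R - (n == 1%N)%:R - (n == 2%N)%:R + (n == k)%:R.
Proof.
have gE : forall j, shiftc (gfcoef (inM k)) j n =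
   (n == j)%:R + shiftc (hU k Fn) j n.
  move=> j; rewrite /shiftc; case: ifP => H; rewrite ?gcoef; last first.
    by rewrite (_ : (n == j) = false) ?addr0 //; lia.
  by rewrite (_ : (n - j == 0)%N = (n == j)) //; lia.
rewrite !gE gcoef -id4F.
by rewrite !opprD !addrA; ring.
Qed.

Lemma id3' n : gfcoef (primeS (inM k)) n - shiftc (gfcoef (primeS (inM k))) 1 n
       - shiftc (gfcoef (primeS (inM k))) 2 n + shiftc (gfcoef (primeS (inM k))) k n
     = (n == k)%:R.
Proof.
have pE : forall j, shiftc (gfcoef (primeS (inM k))) j n = shiftc (hU k (av k)) j n.
  by move=> j; rewrite /shiftc pcoef.
by rewrite !pE pcoef id3.
Qed.

End IntId2.

Section PolyArg.
Local Open Scope ring_scope.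

Definition ag (N : nat) (u v : {poly int}) := forall i, (i <= N)%N -> u`_i = v`_i.

Lemma ag_trans N u v w : ag N u v -> ag N v w -> ag N u w.
Proof. by move=> H1 H2 i Hi; rewrite H1 // H2. Qed.

Lemma ag_sym N u v : ag N u v -> ag N v u.
Proof. by move=> H i Hi; rewrite H. Qed.

Lemma ag_eq N u v : u = v -> ag N u v.
Proof. by move=> ->. Qed.

Lemma ag_add N u1 v1 u2 v2 : ag N u1 v1 -> ag N u2 v2 -> ag N (u1 + u2) (v1 + v2).
Proof. by move=> H1 H2 i Hi; rewrite !coefD H1 // H2. Qed.

Lemma ag_opp N u v : ag N u v -> ag N (- u) (- v).
Proof. by move=> H i Hi; rewrite !coefN H. Qed.

Lemma ag_mull N w u v : ag N u v -> ag N (w * u) (w * v).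
Proof.
move=> H i Hi; rewrite !coefM; apply: eq_bigr => j _; rewrite H //.
exact: leq_trans (leq_subr _ _) Hi.
Qed.

Lemma ag_mulr N w u v : ag N u v -> ag N (u * w) (v * w).
Proof. by move=> H; rewrite ![_ * w]mulrC; apply: ag_mull. Qed.

Lemma ag_cancel N q w : ag N (q * w) 0 -> w`_0 = 1 -> ag N q 0.
Proof.
move=> H w0.
suff S : forall i, (i <= N)%N -> forall j, (j <= i)%N -> q`_j = 0.
  by move=> i Hi; rewrite coef0; apply: (S i Hi).
elim=> [|i IH] Hi j Hj.
  move: Hj; rewrite leqn0 => /eqP->.
  by have := H 0%N Hi; rewrite coef0M w0 mulr1 coef0.
move: Hj; rewrite leq_eqVlt => /orP[/eqP->|Hj]; last first.
  by apply: (IH (ltnW Hi)).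
have := H i.+1 Hi; rewrite coef0 coefM big_ord_recr /= subnn w0 mulr1.
rewrite big1 ?add0r // => l _; rewrite (IH (ltnW Hi)) ?mul0r //.
by rewrite -ltnS.
Qed.

Lemma shift_coef (f : nat -> int) N j i : (i <= N)%N ->
  ((\poly_(l < N.+1) f l) * 'X^j)`_i = shiftc f j i.
Proof.
move=> Hi; rewrite coefMXn /shiftc; case: (leqP j i) => H //.
rewrite coef_poly ifT //; lia.
Qed.

Lemma poly_coef (f : nat -> int) N i : (i <= N)%N -> (\poly_(l < N.+1) f l)`_i = f i.
Proof. by move=> Hi; rewrite coef_poly ltnS Hi. Qed.

Lemma final_step (g p : nat -> int) (k N : nat) (hk : (2 <= k)%N) :
  (forall n, g n - shiftc g 1 n - shiftc g 2 n
     = (n == 0%N)%:R - (n == 1%N)%:R - (n == 2%N)%:R + (n == k)%:R) ->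
  (forall n, p n - shiftc p 1 n - shiftc p 2 n + shiftc p k n = (n == k)%:R) ->
  g N - \sum_(j < N.+1) p j * g (N - j)%N = (N == 0%N)%:R.
Proof.
move=> Hg Hp.
pose Gp := \poly_(l < N.+1) g l.
pose Pp := \poly_(l < N.+1) p l.
pose U : {poly int} := 1 - 'X - 'X^2.
pose D : {poly int} := U + 'X^k.
have HD : forall i, D`_i = (i == 0%N)%:R - (i == 1%N)%:R - (i == 2%N)%:R + (i == k)%:R.
  by move=> i; rewrite /D /U !coefD !coefN coef1 coefX !coefXn.
have H1 : ag N (Gp * U) D.
  move=> i Hi.
  have -> : Gp * U = Gp * 'X^0 - Gp * 'X^1 - Gp * 'X^2 by rewrite /U; ring.
  rewrite !coefD !coefN !shift_coef //.
  have -> : shiftc g 0 i = g i by rewrite /shiftc subn0.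
  by rewrite coef1 coefX !coefXn Hg.
have H2 : ag N (Pp * D) ('X^k).
  move=> i Hi.
  have -> : Pp * D = Pp * 'X^0 - Pp * 'X^1 - Pp * 'X^2 + Pp * 'X^k by rewrite /D /U; ring.
  rewrite !coefD !coefN !shift_coef //.
  have -> : shiftc p 0 i = p i by rewrite /shiftc subn0.
  by rewrite coefXn Hp.
have HA : ag N ((1 - Pp) * D) U.
  apply: (@ag_trans _ _ (D - 'X^k)); last by apply: ag_eq; rewrite /D; ring.
  have -> : (1 - Pp) * D = D - Pp * D by ring.
  by apply: ag_add => //; apply: ag_opp.
have Hq : ag N ((Gp * (1 - Pp) - 1) * (U * D)) 0.
  have -> : (Gp * (1 - Pp) - 1) * (U * D) = (Gp * U) * ((1 - Pp) * D) - U * D by ring.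
  apply: (@ag_trans _ _ (D * U - U * D)); last by apply: ag_eq; ring.
  apply: ag_add; last by move=> i.
  apply: (@ag_trans _ _ (D * ((1 - Pp) * D))); first exact: ag_mulr.
  exact: ag_mull.
have W0 : (U * D)`_0 = 1.
  rewrite coef0M HD /U !coefB coef1 coefX !coefXn /=.
  by rewrite (_ : (0 == k)%N = false) //; lia.
have := ag_cancel _ _ _ Hq W0 N (leqnn N).
rewrite coef0 coefB => /eqP; rewrite subr_eq0 => /eqP.
rewrite mulrBr mulr1 coefB coef1 => <-.
rewrite poly_coef // mulrC coefM; congr (_ - _); apply: eq_bigr => j _.
rewrite !poly_coef //; first by rewrite leq_subr.
by rewrite -ltnS.
Qed.

End PolyArg.

Local Open Scope ring_scope.

Theorem proposition6 (k : nat) (hk : (2 <= k)%N) :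
  (* M is a free monoid *)
  free_monoid (inM k)
  /\
  (* its primes are exactly (2,1^(k-2),1^i,q), q empty or a Fibonacci
     composition starting with 2 not containing (2,1^(k-2)) as a block *)
  (forall c : seq nat,
     primeS (inM k) c <->
     exists (i : nat) (q : seq nat),
       c = blk k ++ nseq i 1%N ++ q /\
       (q = [::] \/ [/\ fibcomp q, head 0%N q = 2%N & ~~ infix (blk k) q]))
  /\
  (* generating function of the primes P(x) = x^k/(1-x-x^2+x^k), i.e.
     (1 - x - x^2 + x^k) P(x) = x^k as formal power series *)
  (forall n : nat,
     gfcoef (primeS (inM k)) n - shiftc (gfcoef (primeS (inM k))) 1 n
       - shiftc (gfcoef (primeS (inM k))) 2 n + shiftc (gfcoef (primeS (inM k))) k n
     = (n == k)%:R)
  /\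
  (* the generating function G(x) of M equals 1 + x^k/(1-x-x^2), i.e.
     (1-x-x^2) G(x) = 1 - x - x^2 + x^k ... *)
  (forall n : nat,
     gfcoef (inM k) n - shiftc (gfcoef (inM k)) 1 n - shiftc (gfcoef (inM k)) 2 n
     = (n == 0%N)%:R - (n == 1%N)%:R - (n == 2%N)%:R + (n == k)%:R)
  /\
  (* ... and equals (1 - P(x))^{-1}, i.e. G(x) (1 - P(x)) = 1 *)
  (forall n : nat,
     gfcoef (inM k) n
       - \sum_(j < n.+1) gfcoef (primeS (inM k)) j * gfcoef (inM k) (n - j)%N
     = (n == 0%N)%:R).
Proof.
split; first by apply: free_inM.
split; first by move=> c; apply: prime_form.
split; first by move=> n; apply: id3'.
split; first by move=> n; apply: id4.
move=> n; apply: (final_step _ _ k) => //.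
  by move=> m; apply: id4.
by move=> m; apply: id3'.
Qed.
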